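(* Let $U\in\mathbb{R}^{d\times n}$ be a frame, $z\in\mathbb{R}^n_{++}$, $c\in\mathbb{R}^n_+$, let $T\subseteq[n]$ have margin $\gamma$, and let $h:=h^{U,z}_T$. Then for any $\alpha\ge1$ satisfying $0\le h(\alpha)-h(1)\le\gamma$, the scaling $z':=z\circ(1_{\bar T}+\alpha1_T)$ satisfies \[\|\mathrm{lev}^U(z)-c\|_2^2-\|\mathrm{lev}^U(z')-c\|_2^2\ge2\gamma(h(\alpha)-h(1)).\]
   Context: A frame is a full row rank matrix $U=(u_1,\dots,u_n)\in\mathbb{R}^{d\times n}$; $Z=\mathrm{diag}(z)$; $\mathrm{lev}^U_j(z):=z_ju_j^{\mathsf T}(UZU^{\mathsf T})^{-1}u_j$; $\bar T=[n]\setminus T$; $1_T$ is the indicator vector; $\circ$ is the entrywise product. Margin of $T$: the largest $\gamma\ge0$ such that some $\nu\in\mathbb{R}$ satisfies $\max_{j\in T}(\mathrm{lev}^U_j(z)-c_j)\le\nu-\gamma\le\nu+\gamma\le\min_{j\notin T}(\mathrm{lev}^U_j(z)-c_j)$. Progress function: $h^{U,z}_T(\alpha):=\sum_{j\in T}\mathrm{lev}^U_j(z\circ(1_{\bar T}+\alpha1_T))$. *)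

(* Defs.v *)
From HB Require Import structures.
From mathcomp Require Import all_boot all_order all_algebra.
Set Implicit Arguments. Unset Strict Implicit. Unset Printing Implicit Defensive.
Import Order.TTheory GRing.Theory Num.Theory.
Local Open Scope ring_scope.

Section Defs.
Variables (R : realFieldType) (d n : nat).

Definition frame (U : 'M[R]_(d, n)) : Prop := \rank U = d.

Definition lev (U : 'M[R]_(d, n)) (z : 'rV[R]_n) (j : 'I_n) : R :=
  z 0 j * (((col j U)^T *m invmx (U *m diag_mx z *m U^T) *m col j U) 0 0).

Definition scaleT (T : {set 'I_n}) (alpha : R) (z : 'rV[R]_n) : 'rV[R]_n :=
  \row_j (z 0 j * ((if j \in T then 0 else 1) + alpha * (if j \in T then 1 else 0))).

Definition progress (U : 'M[R]_(d, n)) (z : 'rV[R]_n) (T : {set 'I_n}) (alpha : R) : R :=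
  \sum_(j in T) lev U (scaleT T alpha z) j.

Definition margin_ok (U : 'M[R]_(d, n)) (z c : 'rV[R]_n) (T : {set 'I_n}) (g : R) : Prop :=
  0 <= g /\ exists nu : R,
    (forall j, j \in T -> lev U z j - c 0 j <= nu - g) /\ nu - g <= nu + g /\
    (forall j, j \notin T -> nu + g <= lev U z j - c 0 j).

Definition has_margin (U : 'M[R]_(d, n)) (z c : 'rV[R]_n) (T : {set 'I_n}) (g : R) : Prop :=
  margin_ok U z c T g /\ forall g', margin_ok U z c T g' -> g' <= g.

Definition levdist2 (U : 'M[R]_(d, n)) (z c : 'rV[R]_n) : R :=
  \sum_j (lev U z j - c 0 j) ^+ 2.

End Defs.

(* Main.v *)
Require Import Defs.
From HB Require Import structures.
From mathcomp Require Import all_boot all_order all_algebra.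
From mathcomp Require Import ring lra.
Import Order.TTheory GRing.Theory Num.Theory.
Local Open Scope ring_scope.
Set Implicit Arguments. Unset Strict Implicit.

Section H.
Variables (R : realFieldType) (d n : nat) (U : 'M[R]_(d, n)).

Definition Mw (w : 'rV[R]_n) := U *m diag_mx w *m U^T.
Definition sq (M : 'M[R]_d) (u : 'rV[R]_d) := (u *m invmx M *m u^T) 0 0.
Definition Q (M : 'M[R]_d) (x : 'rV[R]_d) := (x *m M *m x^T) 0 0.

Lemma levE w j : lev U w j = w 0 j * sq (Mw w) (col j U)^T.
Proof. by rewrite /lev /sq trmxK. Qed.

Lemma MwT w : (Mw w)^T = Mw w.
Proof. by rewrite /Mw !trmx_mul tr_diag_mx trmxK mulmxA. Qed.

Lemma QMw w x : Q (Mw w) x = \sum_j w 0 j * ((x *m U) 0 j) ^+ 2.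
Proof.
rewrite /Q /Mw !mulmxA.
have -> : x *m U *m diag_mx w *m U^T *m x^T = (x *m U *m diag_mx w) *m (x *m U)^T by rewrite trmx_mul mulmxA.
rewrite mul_mx_diag mxE.
by apply: eq_bigr => j _; rewrite !mxE; ring.
Qed.

Lemma QMw_ge0 (w : 'rV[R]_n) x : (forall j, 0 <= w 0 j) -> 0 <= Q (Mw w) x.
Proof. by move=> hw; rewrite QMw sumr_ge0 // => j _; rewrite mulr_ge0 // sqr_ge0. Qed.

Lemma QMw_le (w w' : 'rV[R]_n) x : (forall j, w 0 j <= w' 0 j) -> Q (Mw w) x <= Q (Mw w') x.
Proof.
move=> hw; rewrite !QMw ler_sum // => j _; rewrite ler_wpM2r // sqr_ge0 //.
Qed.

Lemma Mw_unit (w : 'rV[R]_n) : frame U -> (forall j, 0 < w 0 j) -> Mw w \in unitmx.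
Proof.
move=> fU hw; rewrite -row_free_unit -kermx_eq0; apply/eqP/row_matrixP => i.
rewrite row0; set v := row i _.
have hv : v *m Mw w = 0 by apply/sub_kermxP; rewrite row_sub.
have hQ : Q (Mw w) v = 0 by rewrite /Q hv mul0mx mxE.
rewrite QMw in hQ.
have hz : v *m U = 0.
  apply/rowP => j; rewrite [RHS]mxE.
  have H0 : forall k, predT k -> 0 <= w 0 k * ((v *m U) 0 k) ^+ 2.
    by move=> k _; apply: mulr_ge0; [exact: ltW | exact: sqr_ge0].
  have := psumr_eq0P H0 hQ (i := j) isT.
  move=> /eqP; rewrite mulf_eq0 (gt_eqF (hw j)) /= sqrf_eq0 => /eqP //.
by apply/eqP; rewrite -(mulmx_free_eq0 _ (B := U)) ?hz //; apply/eqP.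
Qed.

Section Var.
Variables (M : 'M[R]_d) (u : 'rV[R]_d).
Hypotheses (MT : M^T = M) (Mu : M \in unitmx) (Mpsd : forall x, 0 <= Q M x).

Lemma sc11 (A : 'M[R]_1) : A^T 0 0 = A 0 0.
Proof. by rewrite mxE. Qed.

Lemma e00D (A B : 'M[R]_1) : (A + B) 0 0 = A 0 0 + B 0 0.
Proof. by rewrite mxE. Qed.
Lemma e00N (A : 'M[R]_1) : (- A) 0 0 = - A 0 0.
Proof. by rewrite mxE. Qed.

Lemma var_eq1 : ((u *m invmx M) *m u^T) 0 0 = sq M u.
Proof. by []. Qed.

Lemma var_eq2 : Q M (u *m invmx M) = sq M u.
Proof.
rewrite /Q mulmxKV // /sq trmx_mul trmx_inv MT mulmxA //.
Qed.

Lemma var_ub x : 2 * (x *m u^T) 0 0 - Q M x <= sq M u.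
Proof.
set y := u *m invmx M.
have h := Mpsd (x - y).
have e : Q M (x - y) = Q M x - 2 * (x *m u^T) 0 0 + sq M u.
  rewrite /Q linearB /= !(mulmxBl, mulmxBr) !(e00D, e00N).
  have -> : (x *m M *m x^T) 0 0 = Q M x by [].
  have -> : (y *m M *m y^T) 0 0 = Q M y by [].
  rewrite var_eq2 /y mulmxKV //.
  have -> : x *m M *m (u *m invmx M)^T = x *m u^T.
    by rewrite trmx_mul trmx_inv MT mulmxA mulmxK.
  have -> : (u *m x^T) = (x *m u^T)^T by rewrite trmx_mul trmxK.
  rewrite sc11; lra.
lra.
Qed.
End Var.

Lemma Qscale (M : 'M[R]_d) a x : Q M (a *: x) = a ^+ 2 * Q M x.
Proof. by rewrite /Q linearZ /= -scalemxAr -!scalemxAl !mxE expr2 mulrA. Qed.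

Lemma uZ (u x : 'rV[R]_d) a : ((a *: x) *m u^T) 0 0 = a * (x *m u^T) 0 0.
Proof. by rewrite -scalemxAl mxE. Qed.

Lemma sq_cmp (M M' : 'M[R]_d) (u : 'rV[R]_d) (b : R) :
  M^T = M -> M \in unitmx -> (forall x, 0 <= Q M x) ->
  M'^T = M' -> M' \in unitmx -> (forall x, 0 <= Q M' x) ->
  0 < b -> (forall x, Q M' x <= b * Q M x) -> sq M u <= b * sq M' u.
Proof.
move=> MT Mu Mp M'T M'u M'p bp hQ.
set y := u *m invmx M.
have h := @var_ub M' u M'T M'u M'p (b^-1 *: y).
rewrite Qscale uZ var_eq1 in h.
have h2 := hQ y; rewrite (@var_eq2 M u) // in h2.
set s := sq M u in h h2 *; set s' := sq M' u in h *; set q := Q M' y in h h2.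
have hb : b * b^-1 = 1 by rewrite mulfV // gt_eqF.
have hb0 : 0 < b^-1 by rewrite invr_gt0.
have : b * (2 * (b^-1 * s) - b^-1 ^+ 2 * q) <= b * s'.
  by rewrite ler_wpM2l // ltW.
have -> : b * (2 * (b^-1 * s) - b^-1 ^+ 2 * q) = 2 * s - b^-1 * q.
  by field; rewrite gt_eqF.
have : b^-1 * q <= b^-1 * (b * s) by rewrite ler_wpM2l // ltW.
rewrite mulrA [b^-1 * b]mulrC hb mul1r.
lra.
Qed.

Lemma Mdef w a b : Mw w a b = \sum_j U a j * w 0 j * U b j.
Proof. by rewrite /Mw mul_mx_diag !mxE; apply: eq_bigr => j _; rewrite !mxE. Qed.

Lemma sum_lev w : Mw w \in unitmx -> \sum_j lev U w j = d%:R.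
Proof.
move=> Mu; rewrite -(mxtrace1 R d) -(mulVmx Mu) /mxtrace.
set N := invmx (Mw w).
under eq_bigr => j _ do rewrite levE /sq mxE mulr_sumr; under eq_bigr => j _ do under eq_bigr => b _ do rewrite mxE mulr_suml mulr_sumr.
under [RHS]eq_bigr => a _ do rewrite mxE; under [RHS]eq_bigr => a _ do under eq_bigr => b _ do rewrite Mdef mulr_sumr.
under eq_bigr => j _ do rewrite exchange_big /=.
rewrite exchange_big /=; apply: eq_bigr => a _.
rewrite exchange_big /=; apply: eq_bigr => b _.
apply: eq_bigr => j _.
rewrite !mxE; ring.
Qed.
End H.

Lemma final_ineq (R : realFieldType) (n : nat) (a D : 'I_n -> R) (T : {set 'I_n}) (nu g dl : R) :
  (forall j, j \in T -> a j <= nu - g /\ 0 <= D j) ->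
  (forall j, j \notin T -> nu + g <= a j /\ D j <= 0) ->
  \sum_(j in T) D j = dl -> \sum_j D j = 0 -> 0 <= dl -> dl <= g ->
  2 * g * dl <= \sum_j (a j ^+ 2 - (a j + D j) ^+ 2).
Proof.
move=> hT hN hdl hs d0 dg.
have hs' : \sum_(j | j \notin T) D j = - dl.
  by move: hs; rewrite (bigID (mem T)) /= hdl => e; lra.
have bT : forall j, j \in T -> D j <= dl.
  move=> j jT; rewrite -hdl (bigD1 j) //= lerDl sumr_ge0 // => i /andP[iT _].
  by case: (hT i iT).
have bN : forall j, j \notin T -> - D j <= dl.
  move=> j jT; have e := hs'; rewrite (bigD1 j) //= in e.
  have : 0 <= \sum_(i | (i \notin T) && (i != j)) - D i.
    apply: sumr_ge0 => i /andP[iT _].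
    by case: (hN i iT) => _ ?; rewrite oppr_ge0.
  rewrite sumrN; lra.
rewrite (bigID (mem T)) /=.
have L1 : \sum_(j in T) (- (2 * (nu - g) + dl) * D j) <= \sum_(j in T) (a j ^+ 2 - (a j + D j) ^+ 2).
  apply: ler_sum => j jT; have [h1 h2] := hT j jT; have h3 := bT j jT; nra.
have L2 : \sum_(j | j \notin T) ((- 2 * (nu + g) + dl) * D j) <= \sum_(j | j \notin T) (a j ^+ 2 - (a j + D j) ^+ 2).
  apply: ler_sum => j jT; have [h1 h2] := hN j jT; have h3 := bN j jT; nra.
rewrite -mulr_sumr hdl in L1; rewrite -mulr_sumr hs' in L2.
nra.
Qed.

Lemma scaleTE (R : realFieldType) (n : nat) (T : {set 'I_n}) (al : R) (z : 'rV[R]_n) j :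
  scaleT T al z 0 j = z 0 j * (if j \in T then al else 1).
Proof. by rewrite mxE; case: (j \in T); ring. Qed.

Theorem lemma2p11 (R : realFieldType) (d n : nat) (U : 'M[R]_(d, n))
  (z c : 'rV[R]_n) (T : {set 'I_n}) (gamma alpha : R) :
  frame U ->
  (forall j, 0 < z 0 j) ->
  (forall j, 0 <= c 0 j) ->
  has_margin U z c T gamma ->
  1 <= alpha ->
  0 <= progress U z T alpha - progress U z T 1 ->
  progress U z T alpha - progress U z T 1 <= gamma ->
  levdist2 U z c - levdist2 U (scaleT T alpha z) c
    >= 2 * gamma * (progress U z T alpha - progress U z T 1).
Proof.
move=> fU zp _ [[g0 [nu [hT [_ hN]]]] _] a1 h0 hg.
set z' := scaleT T alpha z.
have e1 : scaleT T 1 z = z by apply/rowP => j; rewrite scaleTE; case: (j \in T); rewrite mulr1.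
have z'p : forall j, 0 < z' 0 j.
  by move=> j; rewrite scaleTE; case: (j \in T); rewrite mulr_gt0 //; lra.
have Mu := Mw_unit fU zp; have M'u := Mw_unit fU z'p.
have Mp : forall x, 0 <= Q (Mw U z) x by move=> x; apply: QMw_ge0 => j; exact: ltW.
have M'p : forall x, 0 <= Q (Mw U z') x by move=> x; apply: QMw_ge0 => j; exact: ltW.
set D := fun j => lev U z' j - lev U z j.
have DT : forall j, j \in T -> 0 <= D j.
  move=> j jT; rewrite /D !levE scaleTE jT subr_ge0 -mulrA ler_wpM2l ?(ltW (zp j)) //.

  apply: (sq_cmp _ (MwT _ _) Mu Mp (MwT _ _) M'u M'p); first lra.
  move=> x; rewrite !QMw mulr_sumr ler_sum // => i _; rewrite scaleTE mulrA.
  apply: ler_wpM2r; first exact: sqr_ge0.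
  case: (i \in T); first by rewrite mulrC.
  by rewrite mulr1 ler_peMl ?(ltW (zp i)).
have DN : forall j, j \notin T -> D j <= 0.
  move=> j jT; rewrite /D !levE scaleTE (negbTE jT) mulr1 subr_le0 ler_wpM2l ?(ltW (zp j)) //.
  rewrite -[X in _ <= X]mul1r.
  apply: (sq_cmp _ (MwT _ _) M'u M'p (MwT _ _) Mu Mp); first lra.
  move=> x; rewrite mul1r; apply: QMw_le => i; rewrite scaleTE.
  case: (i \in T); last by rewrite mulr1.
  by rewrite ler_peMr ?(ltW (zp i)).
have hs : \sum_j D j = 0 by rewrite sumrB !sum_lev // subrr.
have hdl : \sum_(j in T) D j = progress U z T alpha - progress U z T 1.
  by rewrite /progress e1 sumrB.
have H := @final_ineq R n (fun j => lev U z j - c 0 j) D T nu gamma _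
  (fun j jT => conj (hT j jT) (DT j jT)) (fun j jT => conj (hN j jT) (DN j jT)) hdl hs h0 hg.
suff -> : levdist2 U z c - levdist2 U z' c = \sum_j ((lev U z j - c 0 j) ^+ 2 - (lev U z j - c 0 j + D j) ^+ 2) by exact: H.
rewrite /levdist2 -sumrB; apply: eq_bigr => j _; rewrite /D; congr (_ - _ ^+ 2); ring.
Qed.
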